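(* Let $G$ be an edge-magic 2-regular simple graph (in particular, an edge-magic bipartite 2-regular graph, i.e. a disjoint union of even cycles) and let $n\ge1$. Then $|\tau_{G\odot\overline{K}_n}|\ge (n+1)|\tau_G|+2$.
   Context: An edge-magic labeling of a $(p,q)$-graph $G$ (with $p$ vertices and $q$ edges) is a bijection $f:V(G)\cup E(G)\to[1,p+q]$ such that $f(x)+f(xy)+f(y)$ equals a constant $\mathrm{val}(f)$ (the valence) for every edge $xy$; $G$ is edge-magic if it has one. For a graph $H$, $\tau_H$ is the set of integers that are valences of edge-magic labelings of $H$. $G\odot\overline{K}_n$ (the corona, or crown when $G$ is a cycle) is the graph obtained from $G$ by attaching $n$ new pendant vertices to each vertex of $G$. *)

(* Defs.v *)
From mathcomp Require Import all_boot.
Set Implicit Arguments. Unset Strict Implicit. Unset Printing Implicit Defensive.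

Record sgraph := SGraph {
  gV :> finType;
  gadj : rel gV;
  gsym : symmetric gadj;
  girr : irreflexive gadj }.

Definition is_edge (G : sgraph) (s : {set G}) : bool :=
  [exists x : G, exists y : G, gadj x y && (s == [set x; y])].

Definition gE (G : sgraph) : finType := {s : {set G} | is_edge s}.

Definition order_size (G : sgraph) : nat := #|G| + #|gE G|.

Definition regular (G : sgraph) (r : nat) : Prop :=
  forall v : G, #|[set w : G | gadj v w]| = r.

(* An edge-magic labeling with valence k: a bijection
   f : V(G) + E(G) -> [1, p+q] (encoded as an injective map into
   'I_(p+q+1) avoiding 0; since |V+E| = p+q this is a bijection onto [1,p+q])
   with f(x) + f(xy) + f(y) = k for every edge xy. *)
Definition is_em_labeling (G : sgraph)
    (f : {ffun (G + gE G)%type -> 'I_(order_size G).+1}) (k : nat) : bool :=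
  [&& injectiveb f,
      [forall d, 0 < f d] &
      [forall ed : gE G, forall x : G, forall y : G,
         (gadj x y && (val ed == [set x; y])) ==>
         (f (inl x) + f (inr ed) + f (inl y) == k)]].

Definition is_valence (G : sgraph) (k : nat) : bool :=
  [exists f, @is_em_labeling G f k].

Definition edge_magic (G : sgraph) : Prop := exists k, is_valence G k.

(* tau_G : the set of valences.  When G has at least one edge every valence
   is at most 3(p+q), so tau_G is exactly this finite list. *)
Definition tau (G : sgraph) : seq nat :=
  [seq k <- iota 0 (3 * order_size G).+1 | is_valence G k].

(* The corona G (.) \overline{K}_n: vertices V + V x 'I_n, the copies (v,i)
   being pendant vertices attached to v. *)
Definition corona_adj (G : sgraph) (n : nat) : rel (G + (G * 'I_n))%type :=
  fun a b => match a, b with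
  | inl x, inl y => gadj x y
  | inl x, inr (y, _) => x == y
  | inr (x, _), inl y => x == y
  | inr _, inr _ => false
  end.

Lemma corona_sym (G : sgraph) n : symmetric (@corona_adj G n).
Proof.
case=> [x|[x i]] [y|[y j]] //=; try exact: gsym; exact: eq_sym.
Qed.

Lemma corona_irr (G : sgraph) n : irreflexive (@corona_adj G n).
Proof. by case=> [x|[x i]] //=; exact: girr. Qed.

Definition corona (G : sgraph) (n : nat) : sgraph :=
  @SGraph (G + (G * 'I_n))%type (@corona_adj G n) (@corona_sym G n) (@corona_irr G n).

(* Main.v *)
Require Import Defs.
From mathcomp Require Import all_boot zify.
Set Implicit Arguments. Unset Strict Implicit. Unset Printing Implicit Defensive.

Definition oth (G : sgraph) (w v : G) : G := odflt v [pick u | gadj w u && (u != v)].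

Lemma oth_spec (G : sgraph) (hreg : regular G 2) (w v : G) : gadj w v ->
  [/\ gadj w (oth w v), oth w v != v & forall u, gadj w u -> u = v \/ u = oth w v].
Proof.
move=> hwv; have /eqP/cards2P [x [y [hxy hA]]] := hreg w.
have mem u : gadj w u = (u \in [set x; y]) by rewrite -hA inE.
have hv : (v == x) || (v == y) by rewrite -in_set2 -mem.
rewrite /oth; case: pickP => [u /andP [hu huv] | hn]; last first.
  exfalso; case/orP: hv => /eqP hv.
  - by have := hn y; rewrite mem in_set2 eqxx orbT hv eq_sym hxy.
  - by have := hn x; rewrite mem in_set2 eqxx /= hv hxy.
split=> // u' hu'.
move: hu hu'; rewrite !mem !in_set2.
case/orP: hv => /eqP ev; case/orP=> /eqP eu; case/orP=> /eqP eu'; subst;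
  first [ by left | by right | by move: huv; rewrite eqxx ].
Qed.

Lemma oth_oth (G : sgraph) (hreg : regular G 2) (w v : G) : gadj w v ->
  oth w (oth w v) = v.
Proof.
move=> hwv; have [h1 h2 h3] := oth_spec hreg hwv.
have [h1' h2' h3'] := oth_spec hreg h1.
by case: (h3 _ h1') => // e; rewrite e eqxx in h2'.
Qed.

Definition sd (G : sgraph) (d : G * G) : G * G :=
  if gadj d.1 d.2 then (d.2, oth d.2 d.1) else d.

Definition rv (G : sgraph) (d : G * G) : G * G := (d.2, d.1).

Lemma sd_dart (G : sgraph) (hreg : regular G 2) (d : G * G) :
  gadj d.1 d.2 -> gadj (sd d).1 (sd d).2.
Proof.
move=> h; rewrite /sd h /=.
by have [] := oth_spec hreg (_ : gadj d.2 d.1); rewrite // gsym.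
Qed.

Lemma sd_inj (G : sgraph) (hreg : regular G 2) : injective (@sd G).
Proof.
move=> [a b] [a' b']; rewrite /sd /=.
case: (boolP (gadj a b)) => hab; case: (boolP (gadj a' b')) => hab' //.
- case=> eb eo; subst b'.
  have hba : gadj b a by rewrite gsym.
  have hba' : gadj b a' by rewrite gsym.
  have [_ _ h3] := oth_spec hreg hba.
  have [_ n2 _] := oth_spec hreg hba'.
  case: (h3 _ hba') => [->//|e]; by rewrite -eo e eqxx in n2.
- case=> e1 e2; subst a' b'.
  have hba : gadj b a by rewrite gsym.
  have [h1 _ _] := oth_spec hreg hba.
  by rewrite h1 in hab'.
- case=> e1 e2; subst a b.
  have hba : gadj b' a' by rewrite gsym.
  have [h1 _ _] := oth_spec hreg hba.
  by rewrite h1 in hab.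
Qed.

Lemma sd_rv (G : sgraph) (hreg : regular G 2) (d : G * G) :
  gadj d.1 d.2 -> sd (rv (sd d)) = rv d.
Proof.
case: d => a b /= hab; have hba : gadj b a by rewrite gsym.
have [h1 h2 h3] := oth_spec hreg hba.
rewrite /sd /= hab /= gsym h1 /=.
by rewrite oth_oth.
Qed.

Lemma iter_sd_dart (G : sgraph) (hreg : regular G 2) (d : G * G) i :
  gadj d.1 d.2 -> gadj (iter i (@sd G) d).1 (iter i (@sd G) d).2.
Proof. by move=> h; elim: i => //= i IH; apply: sd_dart. Qed.

Lemma iter_rv (G : sgraph) (hreg : regular G 2) (d : G * G) i :
  gadj d.1 d.2 -> iter i (@sd G) (rv (iter i (@sd G) d)) = rv d.
Proof.
move=> h; elim: i => // i IH.
rewrite iterSr /= sd_rv ?IH //; exact: iter_sd_dart.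
Qed.

Lemma iter_inj' (G : sgraph) (hreg : regular G 2) i : injective (iter i (@sd G)).
Proof. elim: i => [//|i IH] x y /= /(sd_inj hreg); exact: IH. Qed.

Lemma not_conn (G : sgraph) (hreg : regular G 2) (d : G * G) :
  gadj d.1 d.2 -> ~~ fconnect (@sd G) d (rv d).
Proof.
move=> h; apply/negP => /iter_findex; set t := findex _ _ _ => ht.
have key i : i <= t -> rv (iter i (@sd G) d) = iter (t - i) (@sd G) d.
  move=> hi; apply: (@iter_inj' G hreg i _ _).
  by rewrite iter_rv // -iterD subnKC.
have ht2 := odd_double_half t.
set j := t./2 in ht2.
have hj : j <= t by lia.
have := key j hj.
have := iter_sd_dart hreg j h.
case: (boolP (odd t)) => ho.
- have -> : (t - j = j.+1)%N by move: ht2; rewrite ho; lia.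
  rewrite /=.
  case: (iter j (@sd G) d) => x y /= hxy.
  rewrite /rv /sd /= hxy => -[e].
  have hyx : gadj y x by rewrite gsym.
  by have [_ n2 _] := oth_spec hreg hyx; rewrite -e eqxx in n2.
- have -> : (t - j = j)%N by move: ht2; rewrite (negbTE ho); lia.
  case: (iter j (@sd G) d) => x y /= hxy.
  rewrite /rv /= => -[e _]; subst y.
  by rewrite girr in hxy.
Qed.

Definition rk (G : sgraph) (d : G * G) : nat := enum_rank (froot (@sd G) d).
Definition inD (G : sgraph) (d : G * G) : bool := gadj d.1 d.2 && (rk d < rk (rv d)).

Lemma froot_sd (G : sgraph) (hreg : regular G 2) (d : G * G) :
  froot (@sd G) (sd d) = froot (@sd G) d.
Proof.
symmetry; apply/(rootP (fconnect_sym (sd_inj hreg))); exact: fconnect1.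
Qed.

Lemma rk_sd (G : sgraph) (hreg : regular G 2) (d : G * G) : rk (sd d) = rk d.
Proof. by rewrite /rk froot_sd. Qed.

Lemma rk_neq (G : sgraph) (hreg : regular G 2) (d : G * G) :
  gadj d.1 d.2 -> rk d != rk (rv d).
Proof.
move=> h; apply/negP => /eqP /val_inj /enum_rank_inj.
move/(rootP (fconnect_sym (sd_inj hreg))).
by apply/negP; apply: not_conn.
Qed.

Lemma inD_rv (G : sgraph) (hreg : regular G 2) (d : G * G) :
  gadj d.1 d.2 -> inD (rv d) = ~~ inD d.
Proof.
move=> h; rewrite /inD /= gsym h /=.
have := rk_neq hreg h; case: d h => a b /= h.
rewrite /rv /=; lia.
Qed.

Lemma inD_oth (G : sgraph) (hreg : regular G 2) (v a : G) :
  gadj v a -> inD (v, oth v a) = ~~ inD (v, a).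
Proof.
move=> h; have hav : gadj a v by rewrite gsym.
have [h1 h2 h3] := oth_spec hreg h.
have e1 : (v, oth v a) = sd (a, v) by rewrite /sd /= hav.
have e2 : (a, v) = rv (v, a) by [].
have e3 : (v, a) = sd (rv (v, oth v a)).
  by rewrite /sd /rv /= gsym h1 oth_oth.
rewrite /inD /= h h1 /=.
rewrite [in rk (v, oth v a)]e1 (rk_sd hreg).
rewrite -[rk (rv (v, oth v a))](rk_sd hreg) -e3.
have := @rk_neq G hreg (v, a) h; rewrite /rv /=; lia.
Qed.

Lemma set2_cases (T : finType) (x y x' y' : T) :
  [set x; y] = [set x'; y'] -> (x = x' /\ y = y') \/ (x = y' /\ y = x').
Proof.
move=> e.
have hx : x \in [set x'; y'] by rewrite -e set21.
have hy : y \in [set x'; y'] by rewrite -e set22.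
have hx' : x' \in [set x; y] by rewrite e set21.
have hy' : y' \in [set x; y] by rewrite e set22.
move: hx hy hx' hy'; rewrite !in_set2.
by do 4 case/orP=> /eqP ?; subst; auto.
Qed.

Definition nb (G : sgraph) (v : G) : G := odflt v [pick u | gadj v u].

Lemma nb_adj (G : sgraph) (hreg : regular G 2) (v : G) : gadj v (nb v).
Proof.
rewrite /nb; case: pickP => // hn.
have := hreg v; rewrite (eq_card0 (A := [set w | gadj v w])) // => w.
by rewrite inE hn.
Qed.

Definition sig (G : sgraph) (v : G) : G :=
  if inD (v, nb v) then nb v else oth v (nb v).

Lemma sig_inD (G : sgraph) (hreg : regular G 2) (v : G) : inD (v, sig v).
Proof.
rewrite /sig; case: ifP => // h.
by rewrite inD_oth ?h // nb_adj.
Qed.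

Lemma sig_adj (G : sgraph) (hreg : regular G 2) (v : G) : gadj v (sig v).
Proof. by have /andP[] := sig_inD hreg v. Qed.

Lemma inD_sig (G : sgraph) (hreg : regular G 2) (v w : G) : inD (v, w) -> w = sig v.
Proof.
move=> h; have /andP [/= hvw _] := h.
have hn := nb_adj hreg v.
have [_ _ h3] := oth_spec hreg hn.
rewrite /sig; case: (h3 _ hvw) => e; subst w; first by rewrite h.
by move: h; rewrite (inD_oth hreg hn) => /negbTE ->.
Qed.

Lemma sig_neq (G : sgraph) (hreg : regular G 2) (v : G) : sig v != v.
Proof. by apply/eqP => e; have := sig_adj hreg v; rewrite e girr. Qed.

Lemma sig_inj (G : sgraph) (hreg : regular G 2) : injective (@sig G).
Proof.
move=> v v' e; apply/eqP/negP => /negP hne.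
set w := sig v in e.
have h1 : inD (v, w) := sig_inD hreg v.
have h2 : inD (v', w) by rewrite e; exact: sig_inD.
have hwv : gadj w v by rewrite gsym; case/andP: h1.
have hwv' : gadj w v' by rewrite gsym; case/andP: h2.
have [_ _ h3] := oth_spec hreg hwv.
case: (h3 _ hwv') => e'; first by rewrite e' eqxx in hne.
have : inD (w, v) = false by rewrite (inD_rv hreg (d := (v, w))) ?h1 //; case/andP: h1.
have : inD (w, v') = false by rewrite (inD_rv hreg (d := (v', w))) ?h2 //; case/andP: h2.
by rewrite e' inD_oth // => /negbFE ->.
Qed.

Lemma ev_proof (G : sgraph) (hreg : regular G 2) (v : G) : is_edge [set v; sig v].
Proof. by apply/existsP; exists v; apply/existsP; exists (sig v); rewrite (sig_adj hreg) eqxx. Qed.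

Definition ev (G : sgraph) (hreg : regular G 2) (v : G) : gE G :=
  exist _ [set v; sig v] (ev_proof hreg v).

Lemma ev_inj (G : sgraph) (hreg : regular G 2) : injective (ev hreg).
Proof.
move=> v v' /(congr1 val) /= /set2_cases [[]//|[e1 e2]].
have h1 : inD (v, sig v) := sig_inD hreg v.
have h2 : inD (v', sig v') := sig_inD hreg v'.
rewrite -e1 -e2 in h2.
move: h2; rewrite -[(sig v, v)]/(rv (v, sig v)) (inD_rv hreg (d := (v, sig v))) ?h1 //.
by case/andP: h1.
Qed.

Lemma ev_surj (G : sgraph) (hreg : regular G 2) (e : gE G) : exists v, e = ev hreg v.
Proof.
case: e => s hs; have := hs; case/existsP=> x /existsP [y /andP [hxy /eqP es]].
case: (boolP (inD (x, y))) => h.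
  exists x; apply: val_inj => /=; by rewrite es -(inD_sig hreg h).
exists y; apply: val_inj => /=.
have hyx : inD (y, x) by rewrite -[(y, x)]/(rv (x, y)) (inD_rv hreg (d := (x, y))).
by rewrite es -(inD_sig hreg hyx) setUC.
Qed.

Lemma em_inj (G : sgraph) f k : @is_em_labeling G f k -> injective f.
Proof. by case/and3P => /injectiveP. Qed.

Lemma em_pos (G : sgraph) f k : @is_em_labeling G f k -> forall z, 0 < f z.
Proof. by case/and3P => _ /forallP. Qed.

Lemma em_edge (G : sgraph) f k : @is_em_labeling G f k ->
  forall (ed : gE G) (x y : G), gadj x y -> val ed = [set x; y] ->
  f (inl x) + f (inr ed) + f (inl y) = k.
Proof.
case/and3P => _ _ /forallP h ed x y hxy he.
have /forallP /(_ x) /forallP /(_ y) := h ed.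
by rewrite hxy he eqxx /= => /eqP.
Qed.

Definition edge_of (G : sgraph) (hreg : regular G 2) (a b : G) : gE G :=
  insubd (ev hreg a) [set a; b].

Lemma val_edge_of (G : sgraph) (hreg : regular G 2) (a b : G) :
  gadj a b -> val (edge_of hreg a b) = [set a; b].
Proof.
move=> h; rewrite val_insubd.
by have -> : is_edge [set a; b] by apply/existsP; exists a; apply/existsP; exists b; rewrite h eqxx.
Qed.

Lemma em_surj (G : sgraph) f k : @is_em_labeling G f k ->
  forall i : 'I_(order_size G).+1, i != ord0 -> exists z, f z = i.
Proof.
move=> hf i hi.
have inj := em_inj hf.
set A := [set f z | z in predT].
have cA : #|A| = order_size G by rewrite card_imset // card_sum.
have cC := cardsC A; rewrite cA card_ord in cC.
case: (boolP (i \in A)) => [/imsetP [z _ ->]|hn]; first by exists z.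
have : [set ord0; i] \subset ~: A.
  apply/subsetP => j; rewrite in_set2 inE => /orP [] /eqP ->; last by [].
  apply/imsetP => -[z _ ez]; have := em_pos hf z; by rewrite -ez.
move/subset_leq_card; rewrite cards2 eq_sym hi; lia.
Qed.

Lemma arith_lo s k a b c : a + b + c = k -> 0 < a -> 0 < b -> 0 < c ->
  a != b -> a != c -> c != b -> (a == s) || (b == s) || (c == s) -> s + 3 <= k.
Proof. lia. Qed.

Lemma arith_hi s k a b c : a + b + c = k -> a <= s -> b <= s -> c <= s ->
  a != b -> a != c -> c != b -> (a == 1) || (b == 1) || (c == 1) -> k <= 2 * s.
Proof. lia. Qed.

Lemma em_bounds (G : sgraph) (hreg : regular G 2) f k : 0 < #|G| ->
  @is_em_labeling G f k -> order_size G + 3 <= k <= 2 * order_size G.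
Proof.
move=> hp hf.
set s := order_size G.
have hs : 0 < s by rewrite /s /order_size; lia.
have inj := em_inj hf; have pos := em_pos hf.
have lt z : f z <= s by have := ltn_ord (f z); rewrite ltnS.
have key v : f (inl v) + f (inr (ev hreg v)) + f (inl (sig v)) = k.
  by apply: (em_edge hf) => //; exact: sig_adj.
have d1 v : nat_of_ord (f (inl v)) != nat_of_ord (f (inl (sig v))).
  apply/negP => /eqP /val_inj /inj [] e.
  by have := sig_neq hreg v; rewrite -e eqxx.
have d2 v : nat_of_ord (f (inl v)) != nat_of_ord (f (inr (ev hreg v))).
  by apply/negP => /eqP /val_inj /inj.
have d3 v : nat_of_ord (f (inl (sig v))) != nat_of_ord (f (inr (ev hreg v))).
  by apply/negP => /eqP /val_inj /inj.
have hmax : (ord_max : 'I_s.+1) != ord0 by rewrite -val_eqE /=; lia.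
have h1 : (inord 1 : 'I_s.+1) != ord0 by rewrite -val_eqE /= inordK; lia.
have [z hz] := em_surj hf hmax.
have [z' hz'] := em_surj hf h1.
have := congr1 val hz; have := congr1 val hz'; rewrite /= inordK; last lia.
move=> {}hz' {}hz.
have zc (w : (G + gE G)%type) : exists v, w = inl v \/ w = inr (ev hreg v).
  case: w => [v|e]; first by exists v; left.
  by have [v ->] := ev_surj hreg e; exists v; right.
have [v ev1] := zc z; have [v' ev2] := zc z'.
apply/andP; split.
- apply: (arith_lo (key v)); rewrite ?pos ?d1 ?d2 ?d3 //.
  by case: ev1 => ?; subst z; rewrite hz eqxx ?orbT.
- apply: (arith_hi (key v')); rewrite ?lt ?d1 ?d2 ?d3 //.
  by case: ev2 => ?; subst z'; rewrite hz' eqxx ?orbT.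
Qed.

Definition enc (s n : nat) (sc : bool) (c t : nat) : nat :=
  if sc then n.+1 * t - c else s * c + t.
Definition Kv (s n : nat) (sc : bool) (al k : nat) : nat :=
  if sc then n.+1 * k - (n + al) else s * (n + al) + k.

Lemma enc3 s n sc al k c1 c2 c3 t1 t2 t3 :
  c1 + c2 + c3 = n + al -> t1 + t2 + t3 = k -> c1 <= n -> c2 <= n -> c3 <= n ->
  0 < t1 -> 0 < t2 -> 0 < t3 ->
  enc s n sc c1 t1 + enc s n sc c2 t2 + enc s n sc c3 t3 = Kv s n sc al k.
Proof.
move=> hc ht h1 h2 h3 p1 p2 p3; rewrite /enc /Kv; case: sc; last first.
  by rewrite -ht -hc !mulnDr; lia.
have e : n.+1 * k = n.+1 * t1 + n.+1 * t2 + n.+1 * t3 by rewrite -ht !mulnDr.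
have q1 : n.+1 <= n.+1 * t1 by rewrite leq_pmulr.
have q2 : n.+1 <= n.+1 * t2 by rewrite leq_pmulr.
have q3 : n.+1 <= n.+1 * t3 by rewrite leq_pmulr.
lia.
Qed.

Lemma enc_range s n sc c t : c <= n -> 0 < t <= s ->
  0 < enc s n sc c t <= n.+1 * s.
Proof.
move=> hc /andP [ht hts]; rewrite /enc; case: sc.
- have q1 : n.+1 <= n.+1 * t by rewrite leq_pmulr.
  have q2 : n.+1 * t <= n.+1 * s by rewrite leq_mul2l hts orbT.
  lia.
- have q : s * c <= s * n by rewrite leq_mul2l hc orbT.
  have -> : n.+1 * s = s * n + s by rewrite mulnC mulnS addnC.
  lia.
Qed.

Lemma enc_inj s n sc c t c' t' : c <= n -> c' <= n -> 0 < t <= s -> 0 < t' <= s ->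
  enc s n sc c t = enc s n sc c' t' -> c = c' /\ t = t'.
Proof.
move=> hc hc' /andP [ht hts] /andP [ht' hts']; rewrite /enc; case: sc => e.
- have [lt|gt|eq] := ltngtP t t'.
  + have : n.+1 * t.+1 <= n.+1 * t' by rewrite leq_mul2l lt orbT.
    rewrite mulnS; lia.
  + have : n.+1 * t'.+1 <= n.+1 * t by rewrite leq_mul2l gt orbT.
    rewrite mulnS; lia.
  + subst t'; have : n.+1 <= n.+1 * t by rewrite leq_pmulr.
    lia.
- have [lt|gt|eq] := ltngtP c c'.
  + have : s * c.+1 <= s * c' by rewrite leq_mul2l lt orbT.
    rewrite mulnS; lia.
  + have : s * c'.+1 <= s * c by rewrite leq_mul2l gt orbT.
    rewrite mulnS; lia.
  + subst c'; lia.
Qed.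

Definition clsv (G : sgraph) (n : nat) (al : 'I_n.+1) (x : corona G n) :
  'I_n.+1 * (G + gE G) :=
  match x with
  | inl v => (al, inl v)
  | inr (v, i) => (lift al i, inl (sig v))
  end.

Definition clse (G : sgraph) (hreg : regular G 2) (n : nat) (al : 'I_n.+1)
  (x y : corona G n) : 'I_n.+1 * (G + gE G) :=
  match x, y with
  | inl a, inl b => (rev_ord al, inr (edge_of hreg a b))
  | inl _, inr (b, i) => (rev_ord (lift al i), inr (ev hreg b))
  | inr (b, i), inl _ => (rev_ord (lift al i), inr (ev hreg b))
  | inr (b, _), inr _ => (al, inl b)
  end.

Definition cls (G : sgraph) (hreg : regular G 2) (n : nat) (al : 'I_n.+1)
  (z : (corona G n + gE (corona G n))%type) : option ('I_n.+1 * (G + gE G)) :=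
  match z with
  | inl x => Some (clsv al x)
  | inr ed => omap (fun xy : corona G n * corona G n => clse hreg al xy.1 xy.2)
      [pick xy : corona G n * corona G n | gadj xy.1 xy.2 && (val ed == [set xy.1; xy.2])]
  end.

Lemma adj_cases (G : sgraph) (hreg : regular G 2) (n : nat) (al : 'I_n.+1)
  (x y : corona G n) : gadj x y ->
  (exists a b, [/\ x = inl a, y = inl b & gadj a b]) \/
  (exists b i, [set x; y] = [set inl b; inr (b, i)] /\
      clse hreg al x y = (rev_ord (lift al i), inr (ev hreg b))).
Proof.
case: x => [a|[b i]]; case: y => [a'|[b' i']] //= h.
- by left; exists a, a'.
- by right; exists b', i'; move/eqP: h => ->.
- by right; exists b, i; move/eqP: h => ->; rewrite setUC.
Qed.

Lemma clse_sym (G : sgraph) (hreg : regular G 2) (n : nat) (al : 'I_n.+1)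
  (x y : corona G n) : gadj x y -> clse hreg al x y = clse hreg al y x.
Proof.
case: x => [a|[b i]]; case: y => [a'|[b' i']] h.
- have h1 : gadj a a' := h.
  have h2 : gadj a' a by rewrite gsym.
  have e : edge_of hreg a a' = edge_of hreg a' a.
    by apply: val_inj; rewrite (val_edge_of hreg h1) (val_edge_of hreg h2) setUC.
  by rewrite /clse e.
- reflexivity.
- reflexivity.
- by move: h.
Qed.

Lemma edge_rep (G : sgraph) (ed : gE G) : exists x y, gadj x y /\ val ed = [set x; y].
Proof.
by case: ed => s /= /existsP [x /existsP [y /andP [h /eqP e]]]; exists x, y.
Qed.

Lemma cls_edge (G : sgraph) (hreg : regular G 2) (n : nat) (al : 'I_n.+1)
  (ed : gE (corona G n)) (x y : corona G n) :
  gadj x y -> val ed = [set x; y] -> cls hreg al (inr ed) = Some (clse hreg al x y).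
Proof.
move=> hxy he; rewrite /cls; case: pickP => [[x' y'] /andP [h' /eqP e'] | hn]; last first.
  by have := hn (x, y); rewrite hxy he eqxx.
rewrite /=; congr Some.
rewrite he in e'; case: (set2_cases e') => [[-> ->]|[-> ->]] //.
exact: clse_sym.
Qed.

Lemma cls_some (G : sgraph) (hreg : regular G 2) (n : nat) (al : 'I_n.+1) z :
  exists p, cls hreg al z = Some p.
Proof.
case: z => [x|ed]; first by exists (clsv al x).
have [x [y [h e]]] := edge_rep ed.
by exists (clse hreg al x y); apply: cls_edge h e.
Qed.

Lemma clsv_inj (G : sgraph) (hreg : regular G 2) (n : nat) (al : 'I_n.+1) :
  injective (@clsv G n al).
Proof.
case=> [v|[v i]] [v'|[v' i']]; rewrite /clsv => -[].
- by move=> ->.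
- by move=> e; have := neq_lift al i'; rewrite -e eqxx.
- by move=> e; have := neq_lift al i; rewrite e eqxx.
- move=> e1 /(sig_inj hreg) ->; have e2 : lift al i = lift al i' by apply: val_inj.
  by rewrite (lift_inj e2).
Qed.

Lemma clse_inj (G : sgraph) (hreg : regular G 2) (n : nat) (al : 'I_n.+1)
  (x y x' y' : corona G n) : gadj x y -> gadj x' y' ->
  clse hreg al x y = clse hreg al x' y' -> [set x; y] = [set x'; y'].
Proof.
move=> h h'.
case: (adj_cases hreg al h) => [[a [b [ex ey hab]]]|[b [i [es ec]]]];
case: (adj_cases hreg al h') => [[a' [b' [ex' ey' hab']]]|[b' [i' [es' ec']]]].
- subst x y x' y'; rewrite /clse => -[] /(congr1 val).
  rewrite (val_edge_of hreg hab) (val_edge_of hreg hab').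
  by case/set2_cases => [[-> ->]|[-> ->]]; rewrite // setUC.
- subst x y; rewrite ec' /clse => -[] e0 _.
  have e : rev_ord al = rev_ord (lift al i') by apply: val_inj.
  have := neq_lift al i'.
  by rewrite -(rev_ord_inj e) eqxx.
- subst x' y'; rewrite ec /clse => -[] e0 _.
  have e : rev_ord (lift al i) = rev_ord al by apply: val_inj.
  have := neq_lift al i.
  by rewrite (rev_ord_inj e) eqxx.
- rewrite ec ec' es es' => -[] e1 e3.
  have eb : b = b'.
    by apply: (@ev_inj G hreg b b'); apply: val_inj.
  subst b'.
  have e2 : rev_ord (lift al i) = rev_ord (lift al i') by apply: val_inj.
  by rewrite (lift_inj (rev_ord_inj e2)).
Qed.

Lemma clse_inr (G : sgraph) (hreg : regular G 2) (n : nat) (al : 'I_n.+1)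
  (x y : corona G n) : gadj x y -> exists e, (clse hreg al x y).2 = inr e.
Proof.
case: x => [a|[b i]]; case: y => [a'|[b' i']] h.
- by exists (edge_of hreg a a').
- by exists (ev hreg b').
- by exists (ev hreg b).
- by move: h.
Qed.

Lemma cls_inj (G : sgraph) (hreg : regular G 2) (n : nat) (al : 'I_n.+1) z z' p :
  cls hreg al z = Some p -> cls hreg al z' = Some p -> z = z'.
Proof.
have rep ed : exists x y, [/\ gadj x y, val ed = [set x; y] &
    cls hreg al (inr ed) = Some (clse hreg al x y)].
  have [x [y [h e]]] := edge_rep ed; exists x, y; split => //; exact: cls_edge.
case: z => [x|ed]; case: z' => [x'|ed'].
- by rewrite /cls => -[<-] [] /(clsv_inj hreg) ->.
- have [x1 [y1 [h1 _ ->]]] := rep ed'; rewrite /cls => -[<-] [] e.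
  have [e1 he1] := clse_inr hreg al h1; move: he1; rewrite e.
  by case: x {e} => [?|[? ?]].
- have [x1 [y1 [h1 _ ->]]] := rep ed; rewrite /cls => -[<-] [] e.
  have [e1 he1] := clse_inr hreg al h1; move: he1; rewrite -e.
  by case: x' {e} => [?|[? ?]].
- have [x1 [y1 [h1 e1 ->]]] := rep ed; have [x2 [y2 [h2 e2 ->]]] := rep ed'.
  move=> -[<-] e0; have e3 : clse hreg al x2 y2 = clse hreg al x1 y1 by case: e0.
  have e := clse_inj h2 h1 e3.
  by congr inr; apply: val_inj; rewrite e1 e2.
Qed.

Definition Lab (G : sgraph) (n : nat) (sc : bool)
  (f : {ffun (G + gE G) -> 'I_(order_size G).+1})
  (p : option ('I_n.+1 * (G + gE G))) : nat :=
  if p is Some pw then enc (order_size G) n sc pw.1 (f pw.2) else 0.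

Definition Flab (G : sgraph) (hreg : regular G 2) (n : nat) (sc : bool) (al : 'I_n.+1)
  (f : {ffun (G + gE G) -> 'I_(order_size G).+1}) :
  {ffun (corona G n + gE (corona G n)) -> 'I_(order_size (corona G n)).+1} :=
  [ffun z => inord (Lab sc f (cls hreg al z))].

Lemma Lab_range (G : sgraph) (n : nat) (sc : bool) f k
  (p : 'I_n.+1 * (G + gE G)) : @is_em_labeling G f k ->
  0 < Lab sc f (Some p) <= n.+1 * order_size G.
Proof.
move=> hf; rewrite /Lab; apply: enc_range.
  by have := ltn_ord p.1.
by rewrite (em_pos hf) -ltnS ltn_ord.
Qed.

Lemma perm3 a b c k : c + b + a = k -> a + b + c = k.
Proof. lia. Qed.

Lemma triple_val (G : sgraph) (hreg : regular G 2) (n : nat) (sc : bool) (al : 'I_n.+1)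
  f k (x y : corona G n) : @is_em_labeling G f k -> gadj x y ->
  Lab sc f (Some (clsv al x)) + Lab sc f (Some (clse hreg al x y)) +
  Lab sc f (Some (clsv al y)) = Kv (order_size G) n sc al k.
Proof.
move=> hf h.
have pos := em_pos hf.
have hal : al <= n by have := ltn_ord al.
have cl (c : 'I_n.+1) : c <= n by have := ltn_ord c.
have rv (c : 'I_n.+1) : nat_of_ord (rev_ord c) = n - c by rewrite /= subSS.
case: x h => [a|[b i]]; case: y => [a'|[b' i']] h.
- have h1 : gadj a a' := h.
  rewrite /Lab /clsv /clse /=.
  have ek := em_edge hf h1 (val_edge_of hreg h1).
  apply: enc3; rewrite ?rv ?pos ?cl //; lia.
- have e : a = b' by apply/eqP.
  subst a; rewrite /Lab /clsv /clse /=.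
  have ek := em_edge hf (sig_adj hreg b') (erefl (val (ev hreg b'))).
  have hb : bump al i' < n.+1 := ltn_ord (lift al i').
  apply: enc3; rewrite ?rv ?pos ?cl //; lia.
- have e : b = a' by apply/eqP.
  subst a'; rewrite /Lab /clsv /clse /=.
  have ek := em_edge hf (sig_adj hreg b) (erefl (val (ev hreg b))).
  have hb : bump al i < n.+1 := ltn_ord (lift al i).
  apply: enc3; rewrite ?rv ?pos ?cl //; try lia.
  exact: perm3 ek.
- by move: h.
Qed.

Lemma corona_val (G : sgraph) (hreg : regular G 2) (n : nat) (sc : bool) (al : 'I_n.+1)
  f k : @is_em_labeling G f k -> n.+1 * order_size G <= order_size (corona G n) ->
  is_em_labeling (Flab hreg sc al f) (Kv (order_size G) n sc al k).
Proof.
move=> hf hN.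
have labv z : exists p, cls hreg al z = Some p /\
   (Flab hreg sc al f z : nat) = Lab sc f (Some p).
  have [p hp] := cls_some hreg al z; exists p; split => //.
  rewrite /Flab ffunE hp inordK // ltnS.
  by have /andP [_ h] := Lab_range sc p hf; apply: leq_trans hN.
apply/and3P; split.
- apply/injectiveP => z z' e.
  have [p [hp ep]] := labv z; have [p' [hp' ep']] := labv z'.
  have := congr1 val e; rewrite /= ep ep' /Lab => e2.
  have [] := enc_inj _ _ _ _ e2.
  + by have := ltn_ord p.1.
  + by have := ltn_ord p'.1.
  + by rewrite (em_pos hf) -ltnS ltn_ord.
  + by rewrite (em_pos hf) -ltnS ltn_ord.
  move=> /val_inj e3 /val_inj /(em_inj hf) e4.
  apply: (cls_inj hp); rewrite hp'; congr Some.
  by case: p p' {hp ep hp' ep' e2} e3 e4 => [c w] [c' w'] /= -> ->.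
- apply/forallP => z; have [p [hp ep]] := labv z.
  by rewrite ep; have /andP [] := Lab_range sc p hf.
- apply/forallP => ed; apply/forallP => x; apply/forallP => y.
  apply/implyP => /andP [hxy /eqP he].
  have [p1 [hp1 ep1]] := labv (inl x).
  have [p2 [hp2 ep2]] := labv (inr ed).
  have [p3 [hp3 ep3]] := labv (inl y).
  rewrite ep1 ep2 ep3.
  rewrite (cls_edge hreg al hxy he) in hp2.
  case: hp1 => <-; case: hp2 => <-; case: hp3 => <-.
  by rewrite (triple_val hreg sc al hf hxy).
Qed.

Lemma cedge1 (G : sgraph) (hreg : regular G 2) (n : nat) (v : G) :
  is_edge (G := corona G n) [set inl v; inl (sig v)].
Proof.
have h : gadj v (sig v) := sig_adj hreg v.
apply/existsP; exists (inl v); apply/existsP; exists (inl (sig v)).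
by apply/andP; split.
Qed.

Lemma cedge2 (G : sgraph) (n : nat) (v : G) (i : 'I_n) :
  is_edge (G := corona G n) [set inl v; inr (v, i)].
Proof.
apply/existsP; exists (inl v); apply/existsP; exists (inr (v, i)).
by apply/andP; split => //=.
Qed.

Definition cemb (G : sgraph) (hreg : regular G 2) (n : nat)
  (z : (G + G * 'I_n)%type) : gE (corona G n) :=
  match z with
  | inl v => exist _ [set inl v; inl (sig v)] (cedge1 hreg n v)
  | inr (v, i) => exist _ [set inl v; inr (v, i)] (cedge2 v i)
  end.

Lemma cemb_inj (G : sgraph) (hreg : regular G 2) (n : nat) : injective (@cemb G hreg n).
Proof.
case=> [v|[v i]] [v'|[v' i']] /(congr1 val) /= /set2_cases.
- case=> [[[e1] [e2]]|[[e1] [e2]]]; first by rewrite e1.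
  congr inl; apply: (@ev_inj G hreg); apply: val_inj => /=.
  by rewrite e2 e1 setUC.
- by case=> [[_ ]|[ ]].
- by case=> [[_ ]|[ ]].
- by case=> [[[e1] [e2 e3]]|[ ]] //; rewrite e2 e3.
Qed.

Lemma card_gE (G : sgraph) (hreg : regular G 2) : #|gE G| = #|G|.
Proof.
apply/eqP; rewrite eqn_leq; apply/andP; split; last first. have hh := @leq_card _ _ (ev hreg) (@ev_inj G hreg).  exact hh.
rewrite -(card_codom (@ev_inj G hreg)); apply/subset_leq_card/subsetP => e _.
by have [v ->] := ev_surj hreg e; exact: codom_f.
Qed.

Lemma order_corona (G : sgraph) (hreg : regular G 2) (n : nat) :
  n.+1 * order_size G <= order_size (corona G n).
Proof.
rewrite /order_size card_gE //.
have h1 : #|corona G n| = #|G| + #|G| * n.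
  by rewrite [LHS]card_sum card_prod card_ord.
have h2 : #|G| + #|G| * n <= #|gE (corona G n)|.
  have h3 := @leq_card _ _ (@cemb G hreg n) (@cemb_inj G hreg n).
  by rewrite card_sum card_prod card_ord in h3.
rewrite h1; nia.
Qed.

Lemma tau_bounds (G : sgraph) (hreg : regular G 2) k : 0 < #|G| ->
  k \in tau G -> is_valence G k /\ order_size G + 3 <= k <= 2 * order_size G.
Proof.
move=> hp; rewrite mem_filter => /andP [hv _]; split => //.
case/existsP: hv => f hf. exact: (@em_bounds G hreg f k hp hf).
Qed.

Lemma in_tau_corona (G : sgraph) (hreg : regular G 2) (n : nat) (sc : bool)
  (al : 'I_n.+1) k : 0 < #|G| -> k \in tau G ->
  Kv (order_size G) n sc al k \in tau (corona G n).
Proof.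
move=> hp hk; have [hv /andP [_ hb]] := tau_bounds hreg hp hk.
have hN := order_corona hreg n.
case/existsP: hv => f hf.
rewrite mem_filter; apply/andP; split.
  by apply/existsP; exists (Flab hreg sc al f); exact: corona_val.
rewrite mem_iota /= add0n ltnS.
have hal : al <= n by have := ltn_ord al.
set s := order_size G in hN hb *.
apply: (@leq_trans (3 * (n.+1 * s))); last by rewrite leq_mul2l hN orbT.
rewrite /Kv; case: sc; nia.
Qed.

Lemma blk_inj n k k' a a' : 2 <= k -> 2 <= k' -> a <= n -> a' <= n ->
  n.+1 * k - (n + a) = n.+1 * k' - (n + a') -> k = k' /\ a = a'.
Proof.
move=> hk hk' ha ha' e.
have q1 : n.+1 * 2 <= n.+1 * k by rewrite leq_mul2l hk orbT.
have q2 : n.+1 * 2 <= n.+1 * k' by rewrite leq_mul2l hk' orbT.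
have [lt|gt|eq] := ltngtP k k'.
- have : n.+1 * k.+1 <= n.+1 * k' by rewrite leq_mul2l lt orbT.
  rewrite mulnS; lia.
- have : n.+1 * k'.+1 <= n.+1 * k by rewrite leq_mul2l gt orbT.
  rewrite mulnS; lia.
- subst k'; lia.
Qed.

Lemma ext_lo n s k kmin a : 1 <= n -> kmin <= k -> s + 3 <= k -> a <= n ->
  kmin + s * n < n.+1 * k - (n + a).
Proof.
move=> hn hk hs ha.
have : n * (s + 3) <= n * k by rewrite leq_mul2l hs orbT.
rewrite mulSn mulnDr (mulnC s n); lia.
Qed.

Lemma ext_hi n s k kmax a : 1 <= n -> 3 <= k -> k <= kmax -> k <= 2 * s ->
  n.+1 * k - (n + a) < kmax + 2 * s * n.
Proof.
move=> hn h3 hk hs.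
have : n * k <= n * (2 * s) by rewrite leq_mul2l hs orbT.
have -> : 2 * s * n = n * (2 * s) by rewrite mulnC.
rewrite [n.+1 * k]mulSn; lia.
Qed.

Theorem mainTheorem4 (G : sgraph) (n : nat) :
  0 < #|G| -> regular G 2 -> edge_magic G -> 1 <= n ->
  (n.+1 * size (tau G) + 2 <= size (tau (corona G n)))%N.
Proof.
move=> hp hreg [k0 hk0] hn.
set s := order_size G.
have hk0t : k0 \in tau G.
  rewrite mem_filter hk0 mem_iota /= add0n ltnS.
  case/existsP: hk0 => f hf; have /andP [_ h] := em_bounds hreg hp hf; lia.
have exP : exists k, k \in tau G by exists k0.
have ubP : forall k, k \in tau G -> k <= 3 * s.
  by move=> k; rewrite mem_filter mem_iota => /andP [_ /andP [_ h]]; lia.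
case: (ex_minnP exP) => kmin hkmin hmin.
case: (ex_maxnP exP ubP) => kmax hkmax hmax.
set L1 := [seq n.+1 * k - (n + a) | k <- tau G, a <- iota 0 n.+1].
set L := L1 ++ [:: kmin + s * n; kmax + 2 * s * n].
have bnd k : k \in tau G -> s + 3 <= k <= 2 * s.
  by move=> hk; have [_ ] := tau_bounds hreg hp hk.
have hsz : size L = n.+1 * size (tau G) + 2.
  by rewrite size_cat size_allpairs size_iota mulnC.
rewrite -hsz; apply: uniq_leq_size.
- rewrite cat_uniq; apply/and3P; split.
  + apply: allpairs_uniq; first by rewrite filter_uniq // iota_uniq.
      exact: iota_uniq.
    move=> [k a] [k' a'] /allpairsP [[k1 a1] [h1 h2 [-> ->]]].
    move=> /allpairsP [[k2 a2] [h3 h4 [-> ->]]] e.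
    rewrite /= in h1 h3 e.
    move: h2 h4; rewrite !mem_iota /= !add0n !ltnS => h2 h4.
    have := bnd _ h1; have := bnd _ h3 => b3 b1.
    have [-> ->] : k1 = k2 /\ a1 = a2 by apply: blk_inj e; lia.
    by [].
  + apply/hasPn => x; rewrite !inE => /orP [] /eqP -> ; apply/negP;
      move/allpairsP => [[k a] [h1 h2 e]];
      move: h2; rewrite mem_iota /= add0n ltnS => h2; rewrite /= in h1 e;
      have := bnd _ h1 => /andP [b1 b2].
    * have := ext_lo hn (hmin _ h1) b1 h2; lia.
    * have := @ext_hi n s k kmax a hn (leq_trans (leq_addl _ _) b1) (hmax _ h1) b2; lia.
  + rewrite /= inE andbT.
    have := hmin _ hkmax; have : 0 < s * n by rewrite muln_gt0 hn andbT /s /order_size; lia.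
    lia.
- move=> x; rewrite mem_cat => /orP [].
  + move/allpairsP => [[k a] [h1 h2 ->]].
    move: h2; rewrite mem_iota /= add0n => h2; rewrite /= in h1.
    have -> : n.+1 * k - (n + a) = Kv s n true (inord a : 'I_n.+1) k.
      by rewrite /Kv inordK.
    exact: in_tau_corona.
  + rewrite !inE => /orP [] /eqP ->.
    * have := in_tau_corona hreg false (ord0 : 'I_n.+1) hp hkmin.
      by rewrite /Kv /= addn0 addnC.
    * have := in_tau_corona hreg false (ord_max : 'I_n.+1) hp hkmax.
      by rewrite /Kv /= (_ : s * (n + n) + kmax = kmax + 2 * s * n) //; nia.
Qed.
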